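(* Let $\Omega\subseteq\mathbb{R}^2$ be a compact domain, $r_d>0$, $a_I>0$, $a_h>0$, $a_v>0$, and let $c_r>0$ be a collision radius. Consider $N$ vehicles with dynamics $\dot p_i=v_i$, $\dot v_i=u_i$ and control law (applied without thresholding) $$u_i=-\sum_{j\neq i}\nabla_i V_I(p_{ij})-\nabla_i V_h(p_i)-a_v v_i.$$ Let $$\Phi=\frac12\sum_{i=1}^N\Bigl(\dot p_i\cdot\dot p_i+\sum_{j\ne i}V_I(p_{ij})+2V_h(p_i)\Bigr).$$ Suppose that for some nonnegative integer $k$, $$\Phi(0)<(k+1)\int_{r_d}^{c_r}f_I(s)\,ds.$$ Then for all $t\ge0$, at most $k$ distinct pairs of vehicles are unsafe at time $t$ (i.e., satisfy $\|p_i(t)-p_j(t)\|\le c_r$); in particular $k=0$ guarantees that no pair is ever unsafe.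
   Context: $p_{ij}:=p_i-p_j$; the signed distance of $x$ from $\partial\Omega$ is positive outside $\Omega$, negative inside. $f_I(r)=a_I(r-r_d)$ for $0\le r<r_d$ and $f_I(r)=0$ for $r\ge r_d$. $V_I(x)=\frac{a_I}{2}(\|x\|-r_d)^2$ for $\|x\|<r_d$, $V_I(x)=0$ otherwise; $V_h(x)=0$ if the signed distance of $x$ to $\partial\Omega$ is $\le -\frac{r_d}{2}$ and $V_h(x)=\frac{a_h}{2}(\text{signed distance}+\frac{r_d}{2})^2$ otherwise. A pair $(i,j)$ is unsafe at time $t$ if $\|p_i(t)-p_j(t)\|\le c_r$. *)

(* Defs.v *)
(* Points of the plane are row vectors 'rV[R]_2 (the product topology of
   'rV[R]_2 is the Euclidean topology; the Euclidean norm is defined below). *)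
From HB Require Import structures.
From mathcomp Require Import all_boot all_order all_algebra.
From mathcomp Require Import all_classical all_reals all_analysis.
Set Implicit Arguments. Unset Strict Implicit. Unset Printing Implicit Defensive.
Import Order.TTheory GRing.Theory Num.Theory.
Import numFieldNormedType.Exports.
Local Open Scope classical_set_scope.
Local Open Scope ring_scope.

Section Defs.
Variable R : realType.

Definition dotv (x y : 'rV[R]_2) : R := \sum_(k < 2) x 0 k * y 0 k.
Definition enorm (x : 'rV[R]_2) : R := Num.sqrt (dotv x x).

Definition grad (f : 'rV[R]_2 -> R) (x : 'rV[R]_2) : 'rV[R]_2 :=
  \row_(k < 2) ('D_(delta_mx 0 k) f x).

Definition bdry (O : set 'rV[R]_2) : set 'rV[R]_2 := closure O `\` interior O.

Definition dist_set (A : set 'rV[R]_2) (x : 'rV[R]_2) : R :=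
  inf [set enorm (x - y) | y in A].

Definition sdist (O : set 'rV[R]_2) (x : 'rV[R]_2) : R :=
  if `[< O x >] then - dist_set (bdry O) x else dist_set (bdry O) x.

Definition compact_domain (O : set 'rV[R]_2) : Prop :=
  compact O /\ exists D : set 'rV[R]_2,
    [/\ open D, connected D, D !=set0 & O = closure D].

Definition fI (aI rd : R) (r : R) : R :=
  if (0 <= r) && (r < rd) then aI * (r - rd) else 0.
Definition VI (aI rd : R) (x : 'rV[R]_2) : R :=
  if enorm x < rd then aI / 2 * (enorm x - rd) ^+ 2 else 0.
Definition Vh (O : set 'rV[R]_2) (ah rd : R) (x : 'rV[R]_2) : R :=
  if sdist O x <= - (rd / 2) then 0 else ah / 2 * (sdist O x + rd / 2) ^+ 2.

Definition oint (a b : R) (f : R -> R) : R :=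
  if a <= b then (\int[lebesgue_measure]_(s in `[a, b]) f s)
  else - (\int[lebesgue_measure]_(s in `[b, a]) f s).

(* the energy Phi at time t, with vdot p_i = v_i *)
Definition Phi (N : nat) (O : set 'rV[R]_2) (aI ah rd : R)
  (p v : 'I_N -> R -> 'rV[R]_2) (t : R) : R :=
  2^-1 * \sum_(i < N) (dotv (v i t) (v i t)
     + \sum_(j < N | j != i) VI aI rd (p i t - p j t)
     + 2 * Vh O ah rd (p i t)).

Definition n_unsafe (N : nat) (cr : R) (p : 'I_N -> R -> 'rV[R]_2) (t : R) : nat :=
  #|[set ij : 'I_N * 'I_N | (ij.1 < ij.2)%N && (enorm (p ij.1 t - p ij.2 t) <= cr)]|.

End Defs.

(* Main.v *)
Require Import Defs.
From HB Require Import structures.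
From mathcomp Require Import all_boot all_order all_algebra.
From mathcomp Require Import all_classical all_reals all_analysis.
From mathcomp Require Import ring lra.
Import Order.TTheory GRing.Theory Num.Theory.
Import numFieldNormedType.Exports.
Local Open Scope classical_set_scope.
Local Open Scope ring_scope.

Section H.
Variable R : realType.

Lemma comp_deriv (g : R -> 'rV[R]_2) (t : R) (w : 'rV[R]_2) k :
  is_derive t 1 g w -> is_derive t 1 (fun s => g s 0 k) (w 0 k).
Proof.
move=> hg; have dg : derivable g t 1 by case: hg.
have := (derivable_mxP g t 1).1 dg 0 k => dk.
apply: DeriveDef => //.
have := derive_mx dg; rewrite derive_val => ->.
by rewrite mxE.
Qed.

Lemma chain (f : 'rV[R]_2 -> R) (g : R -> 'rV[R]_2) (t : R) w :
  differentiable f (g t) -> is_derive t 1 g w ->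
  is_derive t 1 (fun s => f (g s)) (dotv (grad f (g t)) w).
Proof.
move=> df hg.
have dg : differentiable g t by apply/derivable1_diffP; case: hg.
have dfg : differentiable (f \o g) t by apply: differentiable_comp.
apply: DeriveDef; first by apply: diff_derivable.
rewrite (deriveE _ dfg) diff_comp // /=.
have -> : 'd g t 1 = w by rewrite -deriveE // derive_val.
rewrite [in LHS](row_sum_delta w) linear_sum /dotv.
apply: eq_bigr => k _; rewrite linearZ /= mxE -deriveE //.
by rewrite mulrC.
Qed.


Lemma sum_deriv (I : eqType) (r : seq I) (P : pred I) (h : I -> R -> R)
  (dh : I -> R) (t : R) :
  (forall i, P i -> is_derive t 1 (h i) (dh i)) ->
  is_derive t 1 (fun s => \sum_(i <- r | P i) h i s) (\sum_(i <- r | P i) dh i).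
Proof.
move=> hd; elim: r => [|i r IH].
  have -> : (fun s => \sum_(i <- [::] | P i) h i s) = cst 0.
    by apply/funext => s; rewrite big_nil.
  by rewrite big_nil; apply: is_derive_cst.
have -> : (fun s => \sum_(j <- i :: r | P j) h j s) =
   (fun s => (if P i then h i s else 0) + \sum_(j <- r | P j) h j s).
  by apply/funext => s; rewrite big_cons; case: (P i); rewrite ?add0r.
rewrite big_cons.
case Pi: (P i).
  exact: (is_deriveD (hd i Pi) IH).
rewrite -[X in is_derive _ _ _ X]add0r.
exact: (is_deriveD (is_derive_cst 0 t 1) IH).
Qed.

Lemma dotv_deriv (g : R -> 'rV[R]_2) (t : R) (w : 'rV[R]_2) :
  is_derive t 1 g w -> is_derive t 1 (fun s => dotv (g s) (g s)) (2 * dotv (g t) w).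
Proof.
move=> hg; rewrite /dotv.
have hk : forall k : 'I_2, true -> is_derive t 1 (fun s => g s 0 k * g s 0 k)
   (g t 0 k *: w 0 k + g t 0 k *: w 0 k).
  move=> k _; have := is_deriveM (comp_deriv _ _ _ k hg) (comp_deriv _ _ _ k hg); by [].
have := sum_deriv _ (index_enum 'I_2) (fun _ => true) (fun k s => g s 0 k * g s 0 k) _ t hk.
move/is_derive_eq; apply.
rewrite mulr_sumr; apply: eq_bigr => k _.
by rewrite /GRing.scale /= mulr2n mulrDl mul1r.
Qed.

Lemma dotvC (x y : 'rV[R]_2) : dotv x y = dotv y x.
Proof. by apply: eq_bigr => k _; rewrite mulrC. Qed.
Lemma dotvDl (x y z : 'rV[R]_2) : dotv (x + y) z = dotv x z + dotv y z.
Proof. by rewrite /dotv -big_split; apply: eq_bigr => k _; rewrite mxE mulrDl. Qed.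
Lemma dotvNl (x z : 'rV[R]_2) : dotv (- x) z = - dotv x z.
Proof. by rewrite /dotv -sumrN; apply: eq_bigr => k _; rewrite mxE mulNr. Qed.
Lemma dotvBl (x y z : 'rV[R]_2) : dotv (x - y) z = dotv x z - dotv y z.
Proof. by rewrite dotvDl dotvNl. Qed.
Lemma dotvZl a (x z : 'rV[R]_2) : dotv (a *: x) z = a * dotv x z.
Proof. by rewrite /dotv mulr_sumr; apply: eq_bigr => k _; rewrite mxE mulrA. Qed.
Lemma dotv_suml (I : Type) (r : seq I) (P : pred I) (F : I -> 'rV[R]_2) z :
  dotv (\sum_(i <- r | P i) F i) z = \sum_(i <- r | P i) dotv (F i) z.
Proof.
elim: r => [|i r IH]; first by rewrite !big_nil /dotv; apply: big1 => k _; rewrite mxE mul0r.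
by rewrite !big_cons; case: (P i); rewrite ?dotvDl IH.
Qed.
Lemma dotvBr (x y z : 'rV[R]_2) : dotv z (x - y) = dotv z x - dotv z y.
Proof. by rewrite dotvC dotvBl !(dotvC z). Qed.
Lemma dotv_ge0 (x : 'rV[R]_2) : 0 <= dotv x x.
Proof. by apply: sumr_ge0 => k _; rewrite -expr2 sqr_ge0. Qed.


Lemma grad_even (f : 'rV[R]_2 -> R) (x : 'rV[R]_2) :
  (forall y, f (- y) = f y) -> differentiable f x ->
  grad f (- x) = - grad f x.
Proof.
move=> fe df; apply/rowP => k; rewrite !mxE.
have -> : 'D_(delta_mx 0 k) f (- x) = 'D_(- delta_mx 0 k) f x.
  rewrite /derive.
  suff -> : (fun h : R => h^-1 *: ((f \o shift (-x)) (h *: delta_mx 0 k) - f (-x))) =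
    (fun h => h^-1 *: ((f \o shift x) (h *: - delta_mx 0 k) - f x)) by [].
  apply/funext => h /=.
  by rewrite -fe opprD opprK (fe x) -scalerN.
by rewrite !deriveE // linearN.
Qed.

Lemma dotvNN (x : 'rV[R]_2) : dotv (- x) (- x) = dotv x x.
Proof. by rewrite dotvNl dotvC dotvNl opprK. Qed.

Lemma enormN (x : 'rV[R]_2) : enorm (- x) = enorm x.
Proof. by rewrite /enorm dotvNN. Qed.

Lemma VI_even aI rd (x : 'rV[R]_2) : VI aI rd (- x) = VI aI rd x.
Proof. by rewrite /VI enormN. Qed.


Lemma Phi_deriv (O : set 'rV[R]_2) (rd aI ah av : R) (N : nat)
  (p v : 'I_N -> R -> 'rV[R]_2) (t : R) :
  (forall i : 'I_N, differentiable (Vh O ah rd) (p i t)) ->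
  (forall i j : 'I_N, j != i -> differentiable (VI aI rd) (p i t - p j t)) ->
  (forall i : 'I_N, is_derive t 1 (p i) (v i t)) ->
  (forall i : 'I_N, is_derive t 1 (v i)
     (- (\sum_(j < N | j != i) grad (VI aI rd) (p i t - p j t))
      - grad (Vh O ah rd) (p i t) - av *: v i t)) ->
  is_derive t 1 (Phi O aI ah rd p v) (- av * \sum_(i < N) dotv (v i t) (v i t)).
Proof.
move=> dVh dVI dp dv.
set G := fun i j => grad (VI aI rd) (p i t - p j t).
set H := fun i => grad (Vh O ah rd) (p i t).
set w := fun i => - (\sum_(j < N | j != i) G i j) - H i - av *: v i t.
have hi : forall i : 'I_N, true -> is_derive t 1
   (fun s => dotv (v i s) (v i s) + \sum_(j < N | j != i) VI aI rd (p i s - p j s)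
       + 2 * Vh O ah rd (p i s))
   (2 * dotv (v i t) (w i) + \sum_(j < N | j != i) dotv (G i j) (v i t - v j t)
       + 2 * dotv (H i) (v i t)).
  move=> i _.
  have h1 := dotv_deriv _ _ _ (dv i).
  have h2 : is_derive t 1 (fun s => \sum_(j < N | j != i) VI aI rd (p i s - p j s))
     (\sum_(j < N | j != i) dotv (G i j) (v i t - v j t)).
    have hj : forall j : 'I_N, j != i -> is_derive t 1 (fun s => VI aI rd (p i s - p j s))
        (dotv (G i j) (v i t - v j t)).
      move=> j ji.
      have hb : is_derive t 1 (fun s => p i s - p j s) (v i t - v j t).
        have := is_deriveB (dp i) (dp j); by [].
      exact: (chain _ _ _ _ (dVI i j ji) hb).
    exact: (sum_deriv _ _ (fun j => j != i) (fun j s => VI aI rd (p i s - p j s)) _ t hj).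
  have h3 : is_derive t 1 (fun s => 2 * Vh O ah rd (p i s)) (2 * dotv (H i) (v i t)).
    have := is_deriveZ 2 (chain _ _ _ _ (dVh i) (dp i)); by [].
  have := is_deriveD (is_deriveD h1 h2) h3; by [].
have hs := sum_deriv _ (index_enum 'I_N) (fun _ => true) _ _ t hi.
have := is_deriveZ (2^-1) hs.
rewrite /Phi; move/is_derive_eq; apply.
set A := \sum_(i < N) \sum_(j < N | j != i) dotv (G i j) (v i t).
set B := \sum_(i < N) \sum_(j < N | j != i) dotv (G i j) (v j t).
set Hs := \sum_(i < N) dotv (H i) (v i t).
set Ns := \sum_(i < N) dotv (v i t) (v i t).
have E2 : forall i, dotv (v i t) (w i) = - \sum_(j < N | j != i) dotv (G i j) (v i t)
    - dotv (H i) (v i t) - av * dotv (v i t) (v i t).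
  by move=> i; rewrite dotvC /w !dotvBl dotvNl dotv_suml dotvZl.
have E3 : forall i, \sum_(j < N | j != i) dotv (G i j) (v i t - v j t) =
   \sum_(j < N | j != i) dotv (G i j) (v i t) - \sum_(j < N | j != i) dotv (G i j) (v j t).
  by move=> i; rewrite -sumrB; apply: eq_bigr => j _; rewrite dotvBr.
have E4 : B = - A.
  rewrite /B; under eq_bigr => i _ do rewrite big_mkcond.
  rewrite exchange_big /= /A -sumrN; apply: eq_bigr => j _.
  rewrite [in RHS]big_mkcond -sumrN; apply: eq_bigr => i _ /=.
  rewrite eq_sym; case: eqP => [_|/eqP ij]; first by rewrite oppr0.
  rewrite /G -[p i t - p j t]opprB grad_even; last exact: dVI.
    by rewrite dotvNl.
  exact: VI_even.
have S1 : \sum_(i < N) dotv (v i t) (w i) = - A - Hs - av * Ns.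
  by rewrite (eq_bigr _ (fun i _ => E2 i)) !sumrB sumrN mulr_sumr.
have S2 : \sum_(i < N) \sum_(j < N | j != i) dotv (G i j) (v i t - v j t) = A - B.
  by rewrite (eq_bigr _ (fun i _ => E3 i)) sumrB.
rewrite /GRing.scale /= !big_split /= -!mulr_sumr S1 S2 E4.
by rewrite -/Hs; field.
Qed.


Lemma nonincr0 (f : R -> R) (D : R -> R) (t : R) :
  (forall s : R, 0 <= s -> is_derive s 1 f (D s)) -> (forall s : R, 0 <= s -> D s <= 0) ->
  0 <= t -> f t <= f 0.
Proof.
move=> hd hD t0.
have dr : forall s : R, 0 <= s -> derivable f s 1 by move=> s /hd [].
apply: (@ler0_derive1_nincr R f 0 t) => //.
- by move=> x /[!in_itv] /= /andP[x0 _]; apply: dr; rewrite ltW.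
- move=> x /[!in_itv] /= /andP[x0 _]; rewrite derive1E.
  have := hd x (ltW x0) => hx; rewrite derive_val; exact: hD (ltW x0).
- apply: derivable_within_continuous => x /[!in_itv] /= /andP[x0 _]; exact: dr.
Qed.


Lemma int_lin (aI rd cr : R) : cr < rd ->
  \int[lebesgue_measure]_(s in `[cr, rd]) (aI * (s - rd)) = - (aI / 2 * (rd - cr) ^+ 2).
Proof.
move=> crd.
pose g := fun s : R => s - rd.
have hg : forall s : R, is_derive s 1 g 1.
  move=> s; have := is_deriveB (is_derive_id s (1:R)) (is_derive_cst rd s 1).
  by rewrite subr0.
pose F := fun s : R => aI / 2 * (g s * g s).
have hF : forall s : R, is_derive s 1 F (aI * (s - rd)).
  move=> s; have := is_deriveZ (aI / 2) (is_deriveM (hg s) (hg s)).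
  move/is_derive_eq; apply.
  by rewrite /GRing.scale /= /g; field.
have hf : forall s : R, is_derive s 1 (fun u => aI * (u - rd)) aI.
  move=> s; have := is_deriveZ aI (hg s); move/is_derive_eq; apply.
  by rewrite /GRing.scale /= mulr1.
have dF : forall s : R, derivable F s 1 by move=> s; case: (hF s).
have cF : forall s : R, {for s, continuous F}.
  by move=> s; apply: differentiable_continuous; rewrite -derivable1_diffP.
have := @continuous_FTC2 R (fun s => aI * (s - rd)) F cr rd crd.
rewrite /Rintegral => ->.
- rewrite /= /F /g subrr mul0r mulr0 sub0r; congr (- _).
  by rewrite -expr2 -opprB sqrrN.
- apply: derivable_within_continuous => x _.
  by case: (hf x).
- split.
  + by move=> x _; exact: dF.
  + by apply: cvg_at_right_filter; apply: cF.
  + by apply: cvg_at_left_filter; apply: cF.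
- move=> x _; rewrite derive1E; by case: (hF x).
Qed.


Lemma enorm_ge0 (x : 'rV[R]_2) : 0 <= enorm x.
Proof. exact: sqrtr_ge0. Qed.

Lemma VI_ge0 aI rd (x : 'rV[R]_2) : 0 < aI -> 0 <= VI aI rd x.
Proof.
move=> a0; rewrite /VI; case: ifP => _ //.
by apply: mulr_ge0; [apply: divr_ge0; [exact: ltW|] | exact: sqr_ge0].
Qed.

Lemma VI_lb aI rd cr (x : 'rV[R]_2) : 0 < rd -> 0 < aI -> 0 < cr ->
  enorm x <= cr -> oint rd cr (fI aI rd) <= VI aI rd x.
Proof.
move=> rd0 a0 cr0 hx; rewrite /oint; case: ifP => [rdcr|/negbT].
  have -> : \int[lebesgue_measure]_(s in `[rd, cr]) fI aI rd s =
     \int[lebesgue_measure]_(s in `[rd, cr]) (0:R).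
    apply: eq_Rintegral => s; rewrite inE /= in_itv /= => /andP[hs _].
    by rewrite /fI ltNge hs andbF.
  rewrite /Rintegral integral0_eq //=; exact: VI_ge0.
rewrite -ltNge => crd.
have -> : \int[lebesgue_measure]_(s in `[cr, rd]) fI aI rd s =
     \int[lebesgue_measure]_(s in `[cr, rd]) (aI * (s - rd)).
  apply: eq_Rintegral => s; rewrite inE /= in_itv /= => /andP[hs1 hs2].
  rewrite /fI; case: ifP => // /negbT; rewrite negb_and => /orP[h|h].
    by exfalso; move: h; rewrite (le_trans (ltW cr0) hs1).
  have -> : s = rd by apply/eqP; rewrite eq_le hs2 leNgt h.
  by rewrite subrr mulr0.
rewrite int_lin // opprK /VI (le_lt_trans hx crd).
have e0 := enorm_ge0 x.
apply: ler_wpM2l; first by apply: divr_ge0; [exact: ltW|].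
nra.
Qed.


Lemma sum_sym N (F : 'I_N -> 'I_N -> R) : (forall i j, F i j = F j i) ->
  \sum_(i < N) \sum_(j < N | j != i) F i j =
  2 * \sum_(i < N) \sum_(j < N) (if (i < j)%N then F i j else 0).
Proof.
move=> Fs.
have e : forall i, \sum_(j < N | j != i) F i j =
   \sum_(j < N) (if (i < j)%N then F i j else 0) + \sum_(j < N) (if (j < i)%N then F i j else 0).
  move=> i; rewrite big_mkcond -big_split /=; apply: eq_bigr => j _.
  case: (ltngtP i j) => h.
  - have -> : (j != i) by rewrite -val_eqE /= gtn_eqF.
    by rewrite addr0.
  - have -> : (j != i) by rewrite -val_eqE /= ltn_eqF.
    by rewrite add0r.
  - have -> : j = i by apply/val_inj.
    by rewrite eqxx addr0.
rewrite (eq_bigr _ (fun i _ => e i)) big_split /= [X in _ + X = _]exchange_big /=.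
rewrite mulr2n mulrDl !mul1r; congr (_ + _); apply: eq_bigr => i _; apply: eq_bigr => j _.
by rewrite Fs.
Qed.


Lemma count_lb N (F : 'I_N -> 'I_N -> R) (pT : predType ('I_N * 'I_N)) (U : pT) (c : R) :
  (forall i j, 0 <= F i j) ->
  (forall ij, ij \in U -> (ij.1 < ij.2)%N /\ c <= F ij.1 ij.2) ->
  c *+ #|U| <= \sum_(i < N) \sum_(j < N) (if (i < j)%N then F i j else 0).
Proof.
move=> F0 hU; have -> : #|U| = #|[pred x | x \in U]| by rewrite !card.unlock /enum_mem.
rewrite pair_bigA /= -sumr_const big_mkcond /=.
apply: ler_sum => ij _; case: ifP => [/hU [-> //]|_].
by case: ifP.
Qed.

Lemma Vh_ge0 O ah rd (x : 'rV[R]_2) : 0 < ah -> 0 <= Vh O ah rd x.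
Proof.
move=> a0; rewrite /Vh; case: ifP => _ //.
by apply: mulr_ge0; [apply: divr_ge0; [exact: ltW|] | exact: sqr_ge0].
Qed.


Lemma Phi_lb O aI ah rd (N : nat) (p v : 'I_N -> R -> 'rV[R]_2) (s : R) :
  0 < aI -> 0 < ah ->
  let S := \sum_(i < N) \sum_(j < N)
      (if (i < j)%N then VI aI rd (p i s - p j s) else 0) in
  0 <= S /\ S <= Phi O aI ah rd p v s.
Proof.
move=> a0 h0 S; split.
  apply: sumr_ge0 => i _; apply: sumr_ge0 => j _; case: ifP => // _; exact: VI_ge0.
have -> : S = 2^-1 * \sum_(i < N) \sum_(j < N | j != i) VI aI rd (p i s - p j s).
  rewrite (@sum_sym N (fun i j => VI aI rd (p i s - p j s))).
    by rewrite mulrA mulVf ?mul1r // pnatr_eq0.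
  by move=> i j /=; rewrite -VI_even opprB.
rewrite /Phi; apply: ler_wpM2l; first by rewrite invr_ge0.
apply: ler_sum => i _.
rewrite -addrA addrCA lerDl; apply: addr_ge0; first exact: dotv_ge0.
by apply: mulr_ge0 => //; exact: Vh_ge0.
Qed.

End H.

Theorem proposition4 (R : realType) (O : set 'rV[R]_2) (rd aI ah av cr : R)
  (N k : nat) (p v : 'I_N -> R -> 'rV[R]_2) :
  compact_domain O -> 0 < rd -> 0 < aI -> 0 < ah -> 0 < av -> 0 < cr ->
  (* the control law is well defined along the trajectory *)
  (forall t : R, 0 <= t -> forall i : 'I_N, differentiable (Vh O ah rd) (p i t)) ->
  (forall t : R, 0 <= t -> forall i j : 'I_N, j != i ->
     differentiable (VI aI rd) (p i t - p j t)) ->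
  (* dynamics: pdot_i = v_i, vdot_i = u_i *)
  (forall t : R, 0 <= t -> forall i : 'I_N, is_derive t 1 (p i) (v i t)) ->
  (forall t : R, 0 <= t -> forall i : 'I_N, is_derive t 1 (v i)
     (- (\sum_(j < N | j != i) grad (VI aI rd) (p i t - p j t))
      - grad (Vh O ah rd) (p i t) - av *: v i t)) ->
  Phi O aI ah rd p v 0 < (k.+1)%:R * oint rd cr (fI aI rd) ->
  forall t : R, 0 <= t -> (n_unsafe cr p t <= k)%N.
Proof.
move=> _ rd0 aI0 ah0 av0 cr0 dVh dVI dp dv hPhi t t0.
set c := oint rd cr (fI aI rd).
have mono : Phi O aI ah rd p v t <= Phi O aI ah rd p v 0.
  apply: (@nonincr0 R _ (fun s => - av * \sum_(i < N) dotv (v i s) (v i s))) => // s s0.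
    apply: Phi_deriv.
    - exact: dVh.
    - exact: dVI.
    - exact: dp.
    - exact: dv.
  rewrite mulNr oppr_le0; apply: mulr_ge0; first exact: ltW.
  by apply: sumr_ge0 => i _; exact: dotv_ge0.
have [S0 _] := @Phi_lb R O aI ah rd N p v 0 aI0 ah0.
have [_ SPhi0] := @Phi_lb R O aI ah rd N p v 0 aI0 ah0.
have [_ SPhi] := @Phi_lb R O aI ah rd N p v t aI0 ah0.
have cnt : c *+ n_unsafe cr p t <= \sum_(i < N) \sum_(j < N)
      (if (i < j)%N then VI aI rd (p i t - p j t) else 0).
  rewrite /n_unsafe; apply: count_lb => [i j|ij]; first exact: VI_ge0.
  rewrite in_setE /= => /andP[h1 h2]; split => //; exact: VI_lb.
rewrite leqNgt; apply/negP => hk.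
case: (lerP c 0) => hc.
  have h := le_lt_trans (le_trans S0 SPhi0) hPhi.
  by rewrite ltNge mulr_ge0_le0 // in h.
have h2 : (k.+1)%:R * c <= c *+ n_unsafe cr p t.
  by rewrite -[c *+ _]mulr_natl ler_pM2r // ler_nat.
have := le_lt_trans (le_trans h2 (le_trans cnt (le_trans SPhi mono))) hPhi.
by rewrite ltxx.
Qed.
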